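(* Let $H=L^2(\mathbb{R}_+)\subset\tilde H=L^2(\mathbb{R})$, $(S_t)$ the shift semigroup on $H$, $(\tilde S_t)$ the shift group on $\tilde H$, and let $(V_t=W_tS_t,\ t\ge0)$ be a cocyclic perturbation of $(S_t)$ by a cocycle $(W_t,\ t\ge 0)$, where each $W_t$ is regarded as a unitary operator on $\tilde H$ acting as the identity on functions supported in $\mathbb{R}_-$. Define unitary operators on $\tilde H$ by $W_{-t}=\tilde S_{-t}W_t^*\tilde S_t$ for $t\ge0$, and set $\tilde V_t=W_t\tilde S_t$ for $t\in\mathbb{R}$. Then $(\tilde V_t,\ t\in\mathbb{R})$ is a group of unitary operators on $\tilde H$, and $\tilde V_tf=V_tf$ whenever $\operatorname{supp}f\subset\mathbb{R}_+$ and $t\ge0$, while $\tilde V_tf=\tilde S_tf$ whenever $\operatorname{supp}f\subset\mathbb{R}_-$ and $t\le 0$.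
   Context: $(S_tf)(x)=f(x-t)$ for $x>t$, $0$ for $0\le x\le t$; $(\tilde S_tg)(x)=g(x-t)$. A cocycle of $(S_t)$ is a strongly continuous family $(W_t,\ t\ge 0)$ of unitary operators on $H$ with $W_{t+s}=W_t\tilde S_tW_s\tilde S_{-t}$ for $t,s\ge0$ and $W_0=I$; $V_t=W_tS_t$ is the cocyclic perturbation. *)

(* Defs.v *)
From mathcomp Require Import all_boot all_algebra.
From mathcomp Require Import all_classical all_reals all_analysis.
From mathcomp Require Import complex.
Import GRing.Theory Num.Theory.
Set Implicit Arguments. Unset Strict Implicit. Unset Printing Implicit Defensive.
Local Open Scope ring_scope.

(* L^2(R) (complex-valued, Lebesgue measure) is encoded "setoid-style":
   vectors are functions R -> R[i] satisfying L2, equality in L^2 is a.e.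
   equality [aeeq], operators are maps on functions, only relevant on L2. *)

Section Defs.
Variable R : realType.

Definition fn := R -> R[i].
Definition op := fn -> fn.

Definition leb : set (measurableTypeR R) -> \bar R := @lebesgue_measure R.

Definition meas_fn (f : fn) : Prop :=
  measurable_fun setT (fun x => complex.Re (f x)) /\
  measurable_fun setT (fun x => complex.Im (f x)).

Definition abs2 (z : R[i]) : R := complex.Re z ^+ 2 + complex.Im z ^+ 2.

Definition sqnorm (f : fn) : \bar R := (\int[leb]_x (abs2 (f x))%:E)%E.

Definition L2 (f : fn) : Prop := meas_fn f /\ (sqnorm f < +oo)%E.

Definition aeeq (f g : fn) : Prop := {ae leb, forall x, f x = g x}.

Definition supp_pos (f : fn) : Prop := {ae leb, forall x, x < 0 -> f x = 0}.
Definition supp_neg (f : fn) : Prop := {ae leb, forall x, 0 < x -> f x = 0}.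

Definition inH (f : fn) : Prop := L2 f /\ supp_pos f.

Definition inner (f g : fn) : R[i] :=
  let h := fun x => f x * (g x)^* in
  Complex (Rintegral leb setT (fun x => complex.Re (h x)))
          (Rintegral leb setT (fun x => complex.Im (h x))).

Definition unitary_on (P : fn -> Prop) (T : op) : Prop :=
  [/\ (forall f, P f -> P (T f)),
      (forall f g, P f -> P g -> aeeq f g -> aeeq (T f) (T g)),
      (forall (a : R[i]) f g, P f -> P g ->
         aeeq (T (fun x => a * f x + g x)) (fun x => a * T f x + T g x)),
      (forall f g, P f -> P g -> inner (T f) (T g) = inner f g)
    & (forall g, P g -> exists f, P f /\ aeeq (T f) g)].

Definition is_adjoint (T Ts : op) : Prop :=
  (forall g, L2 g -> L2 (Ts g)) /\
  (forall f g, L2 f -> L2 g -> inner (T f) g = inner f (Ts g)).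

Definition shiftG (t : R) : op := fun g x => g (x - t).

Definition shiftS (t : R) : op := fun f x => if t < x then f (x - t) else 0.

Definition cocycle (W : R -> op) : Prop :=
  [/\ (forall t, 0 <= t -> unitary_on L2 (W t) /\ unitary_on inH (W t)),
      (forall t f, 0 <= t -> L2 f -> supp_neg f -> aeeq (W t f) f),
      (forall f, inH f -> aeeq (W 0 f) f),
      (forall t s f, 0 <= t -> 0 <= s -> inH f ->
         aeeq (W (t + s) f) (W t (shiftG t (W s (shiftG (- t) f)))))
    & (forall f, inH f -> forall t0 : R, 0 <= t0 -> forall e : R, 0 < e ->
         exists d : R, 0 < d /\ forall t : R, 0 <= t -> `|t - t0| < d ->
           (sqnorm (fun x => (W t f x - W t0 f x)%R) < e%:E)%E)].

Definition Vpert (W : R -> op) (t : R) : op := fun f => W t (shiftS t f).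

(* W_u for all real u, given Ws t = W_t^*:  W_{-t} = ~S_{-t} W_t^* ~S_t *)
Definition Wfull (W Ws : R -> op) (u : R) : op :=
  if 0 <= u then W u else fun f => shiftG u (Ws (- u) (shiftG (- u) f)).

Definition Vtilde (W Ws : R -> op) (u : R) : op :=
  fun f => Wfull W Ws u (shiftG u f).

End Defs.

(* Main.v *)
Require Import Defs.
From mathcomp Require Import all_boot all_algebra.
From mathcomp Require Import all_classical all_reals all_analysis.
From mathcomp Require Import complex.
From mathcomp Require Import ring lra measurable_realfun.
Import GRing.Theory Num.Theory.
Local Open Scope ring_scope.

Local Open Scope classical_set_scope.

Section A.
Variable R : realType.
Notation mu := (@lebesgue_measure R).

Lemma mshift (t : R) : measurable_fun [set: R] (fun x : R => x - t).
Proof. apply: (@measurable_funD _ _ _ _ idfun (cst (- t))).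
 - exact: measurable_id. - exact: measurable_cst. Qed.

Lemma leb_shift (t : R) (A : set R) : measurable A ->
  pushforward mu ((fun x => x - t) : _ -> measurableTypeR R) A = mu A.
Proof.
move=> mA; apply/esym/lebesgue_measure_unique => //; first exact: mshift.
move=> ? _ [[a b]] _ <-.
change (mu `]a, b] = mu ((fun x : R => x - t) @^-1` `]a, b])).
have -> : (fun x : R => x - t) @^-1` `]a, b] = `](a + t), (b + t)]%classic.
  apply/seteqP; split => x /=; rewrite !in_itv /=.
  - by move=> /andP[h1 h2]; rewrite -ltrBrDr h1 /= -lerBlDr.
  - by move=> /andP[h1 h2]; rewrite ltrBrDr h1 /= lerBlDr.
rewrite !lebesgue_measure_itv /= !lte_fin ltrD2r.
by case: ifP => // _; rewrite -!EFinB; congr (_%:E); ring.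
Qed.

Lemma ae_shift (t : R) (P : R -> Prop) :
  {ae mu, forall x, P x} -> {ae mu, forall x, P (x - t)}.
Proof.
move=> [N [mN N0 PN]].
exists ((fun x => x - t) @^-1` N); split.
- by rewrite -[X in measurable X]setTI; apply: mshift.
- by rewrite -[RHS]N0 -(@leb_shift t N mN).
- by move=> x /= nP; apply: PN.
Qed.

Local Open Scope ereal_scope.
Lemma ge0_integral_shift (t : R) (G : R -> \bar R) :
  measurable_fun [set: R] G -> (forall x, 0 <= G x) ->
  \int[mu]_x G (x - t)%R = \int[mu]_x G x.
Proof.
move=> mG G0.
have := @ge0_integral_pushforward _ _ (measurableTypeR R) (measurableTypeR R) R (fun x : R => (x - t)%R) (mshift t) mu setT G measurableT mG (fun y _ => G0 y).
rewrite preimage_setT => <-.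
apply: eq_measure_integral; first exact: mshift.
by move=> ? A mA _; exact: leb_shift.
Qed.

Lemma integral_shift (t : R) (G : R -> \bar R) :
  measurable_fun [set: R] G ->
  \int[mu]_x G (x - t)%R = \int[mu]_x G x.
Proof.
move=> mG.
have -> : (fun x => G (x - t)%R) = G \o (fun x => (x - t)%R) by [].
rewrite integralE [RHS]integralE funepos_comp funeneg_comp.
rewrite -(@ge0_integral_shift t _ (measurable_funepos mG)); last by move=> x; exact: funepos_ge0.
rewrite -(@ge0_integral_shift t _ (measurable_funeneg mG)); last by move=> x; exact: funeneg_ge0.
by [].
Qed.
End A.

Local Close Scope classical_set_scope.

Local Open Scope classical_set_scope.

Section B.
Variable R : realType.
Notation mu := (@lebesgue_measure R).
Implicit Types f g h : fn R.

Lemma mRe f : meas_fn f -> measurable_fun [set: R] (fun x => complex.Re (f x)).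
Proof. by case. Qed.
Lemma mIm f : meas_fn f -> measurable_fun [set: R] (fun x => complex.Im (f x)).
Proof. by case. Qed.

Lemma abs2_ge0 (z : R[i]) : 0 <= abs2 z.
Proof. by rewrite /abs2 addr_ge0 // sqr_ge0. Qed.

Lemma m_abs2 f : meas_fn f -> measurable_fun [set: R] (fun x => abs2 (f x)).
Proof.
move=> mf; rewrite /abs2; apply: measurable_funD; apply: measurable_funX; [exact: mRe|exact: mIm].
Qed.

Lemma meas_lin (a : R[i]) f g : meas_fn f -> meas_fn g ->
  meas_fn (fun x => a * f x + g x).
Proof.
move=> mf mg; split.
- have -> : (fun x => complex.Re (a * f x + g x)) =
     (fun x => complex.Re a * complex.Re (f x) - complex.Im a * complex.Im (f x) + complex.Re (g x)).
    by apply/funext => x; case: a => c d; case: (f x) => p q; case: (g x) => u v.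
  apply: measurable_funD; last exact: mRe.
  apply: measurable_funB; apply: measurable_funM; try exact: measurable_cst.
  + exact: mRe.
  + exact: mIm.
- have -> : (fun x => complex.Im (a * f x + g x)) =
     (fun x => complex.Re a * complex.Im (f x) + complex.Im a * complex.Re (f x) + complex.Im (g x)).
    by apply/funext => x; case: a => c d; case: (f x) => p q; case: (g x) => u v.
  apply: measurable_funD; last exact: mIm.
  apply: measurable_funD; apply: measurable_funM; try exact: measurable_cst.
  + exact: mIm.
  + exact: mRe.
Qed.

Local Open Scope ereal_scope.
Lemma abs_abs2 f : \int[mu]_x `|(abs2 (f x))%:E| = \int[mu]_x (abs2 (f x))%:E.
Proof. by apply: eq_integral => x _; rewrite gee0_abs // lee_fin abs2_ge0. Qed.

Lemma L2_int f : L2 f <-> meas_fn f /\ mu.-integrable setT (fun x => (abs2 (f x))%:E).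
Proof.
split.
- move=> [mf fin]; split => //; apply/integrableP; split.
    apply/measurable_EFinP; exact: m_abs2.
  by rewrite abs_abs2.
- move=> [mf /integrableP [_ fin]]; split => //.
  by move: fin; rewrite abs_abs2.
Qed.

Local Close Scope ereal_scope.
Lemma abs2_lin_le (a z w : R[i]) : abs2 (a * z + w) <= 2 * abs2 a * abs2 z + 2 * abs2 w.
Proof.
case: a => c d; case: z => p q; case: w => u v; rewrite /abs2 /=.
have E : (c * p - d * q) ^+ 2 + (c * q + d * p) ^+ 2 = (c ^+ 2 + d ^+ 2) * (p ^+ 2 + q ^+ 2) by ring.
have h1 : 0 <= (c * p - d * q - u) ^+ 2 by exact: sqr_ge0.
have h2 : 0 <= (c * q + d * p - v) ^+ 2 by exact: sqr_ge0.
nra.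
Qed.

Local Open Scope ereal_scope.
Lemma L2_lin (a : R[i]) f g : L2 f -> L2 g -> L2 (fun x => (a * f x + g x)%R).
Proof.
move=> /L2_int [mf If] /L2_int [mg Ig]; apply/L2_int; split; first exact: meas_lin.
apply: (le_integrable measurableT _ _ (integrableD measurableT (integrableZl measurableT (2 * abs2 a) If) (integrableZl measurableT 2 Ig))).
- apply/measurable_EFinP; apply: m_abs2; exact: meas_lin.
- move=> x _ /=; rewrite lee_fin (ger0_norm (abs2_ge0 _)) ger0_norm; first exact: abs2_lin_le.
  by rewrite addr_ge0 // mulr_ge0 // ?mulr_ge0 // abs2_ge0.
Qed.
End B.

Local Close Scope classical_set_scope.

Import order.Order.TTheory GRing.Theory Num.Theory.
Local Open Scope classical_set_scope.

Arguments mRe {R f}. Arguments mIm {R f}. Arguments m_abs2 {R f}.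
Arguments meas_lin {R} a {f g}. Arguments L2_lin {R} a {f g}. Arguments L2_int {R f}.
Arguments abs2_ge0 {R}. Arguments mshift {R}.
Section C.
Variable R : realType.
Notation mu := (@lebesgue_measure R).
Implicit Types f g h : fn R.

Definition leb_filter : Filter (nbhs (almost_everywhere (@leb R))) :=
  @ae_filter_ringOfSetsType _ _ R (@lebesgue_measure R).
Hint Resolve leb_filter : core.
Local Existing Instance leb_filter.

Lemma aeeq_refl f : aeeq f f.
Proof. exact: nearW. Qed.

Lemma aeeq_sym f g : aeeq f g -> aeeq g f.
Proof. by apply: filterS => x ->. Qed.

Lemma aeeq_trans f g h : aeeq f g -> aeeq g h -> aeeq f h.
Proof. by apply: filterS2 => x -> ->. Qed.

Lemma aeeq_lin (a : R[i]) f f' g g' : aeeq f f' -> aeeq g g' ->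
  aeeq (fun x => a * f x + g x) (fun x => a * f' x + g' x).
Proof. by apply: filterS2 => x -> ->. Qed.

Lemma aeeq_eq f g : f = g -> aeeq f g.
Proof. by move=> ->; exact: aeeq_refl. Qed.

Lemma aeeq_shift t f g : aeeq f g -> aeeq (shiftG t f) (shiftG t g).
Proof. exact: (@ae_shift R t (fun x => f x = g x)). Qed.

Lemma meas_shift t f : meas_fn f -> meas_fn (shiftG t f).
Proof.
move=> mf; split.
- exact: (measurableT_comp (mRe mf) (mshift t)).
- exact: (measurableT_comp (mIm mf) (mshift t)).
Qed.

Lemma L2_shift t f : L2 f -> L2 (shiftG t f).
Proof.
move=> [mf fin]; split; first exact: meas_shift.
rewrite /sqnorm /shiftG.
rewrite (@ge0_integral_shift R t (fun x => (abs2 (f x))%:E)) //.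
- apply/measurable_EFinP; exact: m_abs2.
- by move=> x; rewrite lee_fin abs2_ge0.
Qed.

Definition cut (i : interval R) f : fn R := fun x => if x \in i then f x else 0.

Lemma cut_indic (i : interval R) (b : R) (x : R) :
  (if x \in i then b else 0) = \1_[set` i] x * b.
Proof.
rewrite indicE; case: ifP => h.
- by rewrite mem_set // mul1r.
- rewrite memNset ?h //= ?mul0r //; by rewrite h.
Qed.

Lemma meas_cut i f : meas_fn f -> meas_fn (cut i f).
Proof.
move=> mf; split.
- have -> : (fun x => complex.Re (cut i f x)) = (fun x => \1_[set` i] x * complex.Re (f x)).
    by apply/funext => x; rewrite -cut_indic /cut; case: ifP.
  apply: measurable_funM; [exact: measurable_indic (measurable_itv i) | exact: mRe].
- have -> : (fun x => complex.Im (cut i f x)) = (fun x => \1_[set` i] x * complex.Im (f x)).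
    by apply/funext => x; rewrite -cut_indic /cut; case: ifP.
  apply: measurable_funM; [exact: measurable_indic (measurable_itv i) | exact: mIm].
Qed.

Lemma L2_cut i f : L2 f -> L2 (cut i f).
Proof.
move=> /L2_int [mf If]; apply/L2_int; split; first exact: meas_cut.
apply: (le_integrable measurableT _ _ If).
- apply/measurable_EFinP; apply: m_abs2; exact: meas_cut.
- move=> x _ /=; rewrite lee_fin (ger0_norm (abs2_ge0 _)) (ger0_norm (abs2_ge0 _)) /cut.
  case: ifP => // _; rewrite /abs2 /= expr0n /= addr0.
  by rewrite addr_ge0 // sqr_ge0.
Qed.

Lemma re_prod (z w : R[i]) : complex.Re (z * w^*) = complex.Re z * complex.Re w + complex.Im z * complex.Im w.
Proof. by case: z => p q; case: w => r s /=; ring. Qed.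
Lemma im_prod (z w : R[i]) : complex.Im (z * w^*) = complex.Im z * complex.Re w - complex.Re z * complex.Im w.
Proof. by case: z => p q; case: w => r s /=; ring. Qed.

Lemma m_re_prod f g : meas_fn f -> meas_fn g ->
  measurable_fun [set: R] (fun x => complex.Re (f x * (g x)^*)).
Proof.
move=> mf mg.
have -> : (fun x => complex.Re (f x * (g x)^*)) = (fun x => complex.Re (f x) * complex.Re (g x) + complex.Im (f x) * complex.Im (g x)).
  by apply/funext => x; rewrite re_prod.
apply: measurable_funD; apply: measurable_funM; by [exact: mRe|exact: mIm].
Qed.

Lemma m_im_prod f g : meas_fn f -> meas_fn g ->
  measurable_fun [set: R] (fun x => complex.Im (f x * (g x)^*)).
Proof.
move=> mf mg.
have -> : (fun x => complex.Im (f x * (g x)^*)) = (fun x => complex.Im (f x) * complex.Re (g x) - complex.Re (f x) * complex.Im (g x)).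
  by apply/funext => x; rewrite im_prod.
apply: measurable_funB; apply: measurable_funM; by [exact: mRe|exact: mIm].
Qed.

Lemma re_prod_le (z w : R[i]) : `|complex.Re (z * w^*)| <= abs2 z + abs2 w.
Proof.
rewrite re_prod /abs2; case: z => p q; case: w => r s /=.
have h1 := sqr_ge0 (p - r); have h2 := sqr_ge0 (q - s).
have h3 := sqr_ge0 (p + r); have h4 := sqr_ge0 (q + s).
rewrite ler_norml; apply/andP; split; nra.
Qed.

Lemma im_prod_le (z w : R[i]) : `|complex.Im (z * w^*)| <= abs2 z + abs2 w.
Proof.
rewrite im_prod /abs2; case: z => p q; case: w => r s /=.
have h1 := sqr_ge0 (q - r); have h2 := sqr_ge0 (p - s).
have h3 := sqr_ge0 (q + r); have h4 := sqr_ge0 (p + s).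
rewrite ler_norml; apply/andP; split; nra.
Qed.

Local Open Scope ereal_scope.
Lemma int_re_prod f g : L2 f -> L2 g ->
  mu.-integrable setT (EFin \o (fun x => complex.Re (f x * (g x)^*)%R)).
Proof.
move=> /L2_int [mf If] /L2_int [mg Ig].
apply: (le_integrable measurableT _ _ (integrableD measurableT If Ig)).
- apply/measurable_EFinP; exact: m_re_prod.
- move=> x _ /=; rewrite lee_fin (ger0_norm (addr_ge0 (abs2_ge0 _) (abs2_ge0 _))).
  exact: re_prod_le.
Qed.

Lemma int_im_prod f g : L2 f -> L2 g ->
  mu.-integrable setT (EFin \o (fun x => complex.Im (f x * (g x)^*)%R)).
Proof.
move=> /L2_int [mf If] /L2_int [mg Ig].
apply: (le_integrable measurableT _ _ (integrableD measurableT If Ig)).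
- apply/measurable_EFinP; exact: m_im_prod.
- move=> x _ /=; rewrite lee_fin (ger0_norm (addr_ge0 (abs2_ge0 _) (abs2_ge0 _))).
  exact: im_prod_le.
Qed.
Local Close Scope ereal_scope.

Lemma inner_aeeq f f' g g' : L2 f -> L2 f' -> L2 g -> L2 g' ->
  aeeq f f' -> aeeq g g' -> inner f g = inner f' g'.
Proof.
move=> [mf _] [mf' _] [mg _] [mg' _] ef eg; rewrite /inner /Rintegral; congr Complex; congr fine.
- apply: ae_eq_integral => //.
  + apply/measurable_EFinP; exact: m_re_prod.
  + apply/measurable_EFinP; exact: m_re_prod.
  + by apply: filterS2 ef eg => x -> ->.
- apply: ae_eq_integral => //.
  + apply/measurable_EFinP; exact: m_im_prod.
  + apply/measurable_EFinP; exact: m_im_prod.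
  + by apply: filterS2 ef eg => x -> ->.
Qed.

Lemma inner_sub h a b : L2 h -> L2 a -> L2 b ->
  inner h (fun x => a x - b x) = inner h a - inner h b.
Proof.
move=> Lh La Lb; rewrite /inner.
have -> : (fun x => complex.Re (h x * (a x - b x)^*)) =
  (fun x => complex.Re (h x * (a x)^*) - complex.Re (h x * (b x)^*)).
  by apply/funext => x; case: (h x) => p q; case: (a x) => r s; case: (b x) => u v /=; ring.
have -> : (fun x => complex.Im (h x * (a x - b x)^*)) =
  (fun x => complex.Im (h x * (a x)^*) - complex.Im (h x * (b x)^*)).
  by apply/funext => x; case: (h x) => p q; case: (a x) => r s; case: (b x) => u v /=; ring.
rewrite (RintegralB measurableT (int_re_prod _ _ Lh La) (int_re_prod _ _ Lh Lb)).
rewrite (RintegralB measurableT (int_im_prod _ _ Lh La) (int_im_prod _ _ Lh Lb)).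
by [].
Qed.

Lemma abs2_eq0 (z : R[i]) : abs2 z = 0 -> z = 0.
Proof.
case: z => p q; rewrite /abs2 /= => E.
have hp : p ^+ 2 = 0.
  apply/eqP; rewrite eq_le sqr_ge0 andbT; have := sqr_ge0 q; lra.
have hq : q ^+ 2 = 0.
  apply/eqP; rewrite eq_le sqr_ge0 andbT; have := sqr_ge0 p; lra.
move/eqP: hp; rewrite expf_eq0 /= => /eqP ->.
by move/eqP: hq; rewrite expf_eq0 /= => /eqP ->.
Qed.

Lemma inner_self h : L2 h -> inner h h = 0 -> aeeq h (fun _ => 0).
Proof.
move=> [mh fin] /(congr1 (@complex.Re R)) /=.
have -> : (fun x => complex.Re (h x * (h x)^*)) = (fun x => abs2 (h x)).
  by apply/funext => x; rewrite re_prod /abs2 !expr2.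
rewrite /Rintegral => E0.
have I0 : (\int[mu]_x (abs2 (h x))%:E = 0)%E.
  have ge : (0 <= \int[mu]_x (abs2 (h x))%:E)%E.
    by apply: integral_ge0 => x _; rewrite lee_fin abs2_ge0.
  have fn : ((\int[mu]_x (abs2 (h x))%:E) \is a fin_num)%E.
    by rewrite ge0_fin_numE //.
  by rewrite -(fineK fn) E0.
have mh2 : measurable_fun [set: R] (fun x => (abs2 (h x))%:E).
  by apply/measurable_EFinP; exact: m_abs2.
have := (ae_eq_integral_abs mu measurableT mh2).1.
rewrite abs_abs2 => /(_ I0).
apply: filterS => x /(_ Logic.I) /= /eqP; rewrite eqe => /eqP.
exact: abs2_eq0.
Qed.

Lemma nondeg a b : L2 a -> L2 b -> (forall f, L2 f -> inner f a = inner f b) ->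
  aeeq a b.
Proof.
move=> La Lb H.
have Lh : L2 (fun x => a x - b x).
  have := L2_lin (-1) Lb La.
  by rewrite (_ : (fun x => -1 * b x + a x) = (fun x => a x - b x)) //; apply/funext => x; rewrite mulN1r addrC.
have := inner_self _ Lh.
rewrite inner_sub // (H _ Lh) subrr => /(_ erefl).
by apply: filterS => x /eqP; rewrite subr_eq0 => /eqP.
Qed.

Lemma inner_shift t f g : L2 f -> L2 g -> inner (shiftG t f) (shiftG t g) = inner f g.
Proof.
move=> [mf _] [mg _]; rewrite /inner /Rintegral /shiftG; congr Complex; congr fine.
- apply: (@integral_shift R t (EFin \o (fun x => complex.Re (f x * (g x)^*)))).
  apply/measurable_EFinP; exact: m_re_prod.
- apply: (@integral_shift R t (EFin \o (fun x => complex.Im (f x * (g x)^*)))).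
  apply/measurable_EFinP; exact: m_im_prod.
Qed.

Definition posp f : fn R := cut `[0, +oo[%R f.
Definition negp f : fn R := cut `]-oo, 0[%R f.

Lemma decomp f : f = (fun x => 1 * posp f x + negp f x).
Proof.
apply/funext => x; rewrite /posp /negp /cut !in_itv /= andbT mul1r.
by case: (leP 0 x) => _; rewrite ?addr0 ?add0r.
Qed.

Lemma supp_posp f : supp_pos (posp f).
Proof. apply: nearW => x x0; rewrite /posp /cut in_itv /= andbT. by case: leP => // h; exfalso; lra. Qed.

Lemma supp_negp f : supp_neg (negp f).
Proof. apply: nearW => x x0; rewrite /negp /cut in_itv /=. by case: ltP => // h; exfalso; lra. Qed.

Lemma supp_neg_shift t f : 0 <= t -> supp_neg f -> supp_neg (shiftG (- t) f).
Proof.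
move=> t0 H; have := @ae_shift R (- t) (fun x => 0 < x -> f x = 0) H.
by apply: filterS => x Hx x0; rewrite /shiftG; apply: Hx; lra.
Qed.

Lemma ae_neq t : {ae (@leb R), forall x, x != t}.
Proof.
exists [set t]; split => //.
- exact: lebesgue_measure_set1.
- by move=> x /= /negP; rewrite negbK => /eqP ->.
Qed.

Lemma shiftS_cut t f : shiftS t f = cut `]t, +oo[%R (shiftG t f).
Proof. by apply/funext => x; rewrite /shiftS /cut in_itv /= andbT. Qed.

Lemma shiftS_shiftG t f : supp_pos f -> aeeq (shiftG t f) (shiftS t f).
Proof.
move=> H; have := @ae_shift R t (fun x => x < 0 -> f x = 0) H.
move=> H2; apply: filterS2 (ae_neq t) H2 => x xt Hx.
rewrite /shiftS /shiftG; case: ifP => // /negbT; rewrite -leNgt => xlt.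
apply: Hx; move: xt; rewrite neq_lt => /orP [h|h]; lra.
Qed.

Lemma shiftGC a b f : shiftG a (shiftG b f) = shiftG (a + b) f.
Proof. by apply/funext => x; rewrite /shiftG; congr f; ring. Qed.

Lemma shiftG0 f : shiftG 0 f = f.
Proof. by apply/funext => x; rewrite /shiftG subr0. Qed.
End C.

Local Close Scope classical_set_scope.

Local Open Scope classical_set_scope.

Arguments L2_lin {R} a {f g}. Arguments L2_int {R f}.
Arguments aeeq_refl {R} f. Arguments aeeq_sym {R f g}. Arguments aeeq_trans {R f g h}.
Arguments aeeq_lin {R} a {f f' g g'}. Arguments aeeq_shift {R} t {f g}.
Arguments L2_shift {R} t {f}. Arguments L2_cut {R} i {f}.
Arguments inner_aeeq {R f f' g g'}. Arguments nondeg {R a b}.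
Arguments inner_shift {R} t {f g}.

Section D.
Variable R : realType.
Implicit Types f g h : fn R.

Definition good (T : op R) :=
  (forall f, L2 f -> L2 (T f)) /\ (forall f g, L2 f -> L2 g -> aeeq f g -> aeeq (T f) (T g)).

Lemma unit_comp (A B : op R) : unitary_on (@L2 R) A -> unitary_on (@L2 R) B ->
  unitary_on (@L2 R) (fun f => A (B f)).
Proof.
move=> [Am Ar Al Ai As] [Bm Br Bl Bi Bs]; split.
- by move=> f Lf; apply: Am; apply: Bm.
- by move=> f g Lf Lg e; apply: Ar; [exact: Bm|exact: Bm|exact: Br].
- move=> a f g Lf Lg; apply: aeeq_trans (Al a _ _ (Bm _ Lf) (Bm _ Lg)).
  apply: Ar; [apply: Bm; exact: L2_lin|apply: L2_lin; exact: Bm|exact: Bl].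
- by move=> f g Lf Lg; rewrite Ai ?Bi //; exact: Bm.
- move=> g Lg; have [f1 [Lf1 e1]] := As g Lg; have [f0 [Lf0 e0]] := Bs f1 Lf1.
  exists f0; split => //; apply: aeeq_trans e1; apply: Ar => //; exact: Bm.
Qed.

Lemma unit_shift t : unitary_on (@L2 R) (shiftG t).
Proof.
split.
- by move=> f; exact: L2_shift.
- by move=> f g _ _; exact: aeeq_shift.
- by move=> a f g _ _; exact: aeeq_refl.
- by move=> f g Lf Lg; rewrite inner_shift.
- move=> g Lg; exists (shiftG (- t) g); split; first exact: L2_shift.
  by rewrite shiftGC subrr shiftG0; exact: aeeq_refl.
Qed.
End D.

Local Close Scope classical_set_scope.

Local Open Scope classical_set_scope.

Arguments L2_lin {R} a {f g}. Arguments L2_int {R f}.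
Arguments aeeq_refl {R} f. Arguments aeeq_sym {R f g}. Arguments aeeq_trans {R f g h}.
Arguments aeeq_lin {R} a {f f' g g'}. Arguments aeeq_shift {R} t {f g}.
Arguments L2_shift {R} t {f}. Arguments L2_cut {R} i {f}.
Arguments inner_aeeq {R f f' g g'}. Arguments nondeg {R a b}.
Arguments inner_shift {R} t {f g}.
Arguments unit_comp {R A B}. Arguments supp_neg_shift {R t f}. Arguments decomp {R}. Arguments posp {R}. Arguments negp {R}. Arguments cut {R}. Arguments supp_posp {R}. Arguments supp_negp {R}. Arguments unit_shift {R}.

Section E.
Variable R : realType.
Variables W Ws : R -> op R.
Hypothesis hc : cocycle W.
Hypothesis ha : forall t, 0 <= t -> is_adjoint (W t) (Ws t).
Implicit Types f g h : fn R.

Lemma Wunit t : 0 <= t -> unitary_on (@L2 R) (W t).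
Proof. move=> t0; have := hc; rewrite /cocycle => -[hU _ _ _ _]; by case: (hU t t0). Qed.

Lemma WL2 t f : 0 <= t -> L2 f -> L2 (W t f).
Proof. by move=> /Wunit [m _ _ _ _]; exact: m. Qed.

Lemma Wr t f g : 0 <= t -> L2 f -> L2 g -> aeeq f g -> aeeq (W t f) (W t g).
Proof. by move=> /Wunit [_ r _ _ _]; exact: r. Qed.

Lemma WsL2 t f : 0 <= t -> L2 f -> L2 (Ws t f).
Proof. by move=> /ha [m _]; exact: m. Qed.

Lemma Wadj t f g : 0 <= t -> L2 f -> L2 g -> inner (W t f) g = inner f (Ws t g).
Proof. by move=> /ha [_ m]; exact: m. Qed.

Lemma Wsr t f g : 0 <= t -> L2 f -> L2 g -> aeeq f g -> aeeq (Ws t f) (Ws t g).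
Proof.
move=> t0 Lf Lg e; apply: nondeg; try exact: WsL2.
move=> h Lh; rewrite -!Wadj //.
apply: inner_aeeq => //; try exact: aeeq_refl; exact: WL2.
Qed.

Lemma WsW t f : 0 <= t -> L2 f -> aeeq (Ws t (W t f)) f.
Proof.
move=> t0 Lf; apply: nondeg => //; first by apply: WsL2 => //; exact: WL2.
move=> h Lh; rewrite -Wadj //; last exact: WL2.
by case: (Wunit t t0) => _ _ _ + _; apply.
Qed.

Lemma WWs t f : 0 <= t -> L2 f -> aeeq (W t (Ws t f)) f.
Proof.
move=> t0 Lf; have [_ _ _ _ As] := Wunit t t0.
have [g [Lg e]] := As f Lf; have e2 := e.
apply: aeeq_trans e.
apply: Wr => //; first exact: WsL2.
apply: aeeq_trans (WsW _ _ t0 Lg).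
apply: Wsr => //; first exact: WL2.
exact: aeeq_sym e2.
Qed.

Lemma Wsunit t : 0 <= t -> unitary_on (@L2 R) (Ws t).
Proof.
move=> t0; split.
- by move=> f; exact: WsL2.
- by move=> f g; exact: Wsr.
- move=> a f g Lf Lg.
  have Lu : L2 (fun x => a * Ws t f x + Ws t g x) by apply: L2_lin; exact: WsL2.
  apply: aeeq_trans (WsW _ _ t0 Lu).
  apply: Wsr => //; [exact: L2_lin|exact: WL2|].
  have [_ _ Wl _ _] := Wunit t t0.
  apply: aeeq_sym; apply: aeeq_trans (Wl _ _ _ (WsL2 _ _ t0 Lf) (WsL2 _ _ t0 Lg)) _.
  by apply: aeeq_lin; exact: WWs.
- move=> f g Lf Lg; rewrite -Wadj //; last exact: WsL2.
  apply: inner_aeeq => //; [apply: WL2 => //; exact: WsL2|exact: WWs|exact: aeeq_refl].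
- move=> g Lg; exists (W t g); split; first exact: WL2.
  exact: WsW.
Qed.

Lemma Wneg t f : 0 <= t -> L2 f -> supp_neg f -> aeeq (W t f) f.
Proof. move=> t0 Lf sf; have := hc; rewrite /cocycle => -[_ hN _ _ _]; exact: hN. Qed.

Lemma W0H f : inH f -> aeeq (W 0 f) f.
Proof. move=> Hf; have := hc; rewrite /cocycle => -[_ _ h0 _ _]; exact: h0. Qed.

Lemma WC t s f : 0 <= t -> 0 <= s -> inH f ->
  aeeq (W (t + s) f) (W t (shiftG t (W s (shiftG (- t) f)))).
Proof. move=> t0 s0 Hf; have := hc; rewrite /cocycle => -[_ _ _ hC _]; exact: hC. Qed.

Lemma Wsneg t f : 0 <= t -> L2 f -> supp_neg f -> aeeq (Ws t f) f.
Proof.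
move=> t0 Lf sf; apply: aeeq_trans (WsW _ _ t0 Lf).
apply: Wsr => //; first exact: WL2.
exact: aeeq_sym (Wneg _ _ t0 Lf sf).
Qed.

Lemma unit_id : unitary_on (@L2 R) (fun f => f).
Proof.
split => //.
- by move=> a f g _ _; exact: aeeq_refl.
- by move=> g Lg; exists g; split => //; exact: aeeq_refl.
Qed.

Lemma ext_decomp (A B : op R) : unitary_on (@L2 R) A -> unitary_on (@L2 R) B ->
  (forall f, inH f -> aeeq (A f) (B f)) ->
  (forall f, L2 f -> supp_neg f -> aeeq (A f) (B f)) ->
  forall f, L2 f -> aeeq (A f) (B f).
Proof.
move=> [Am Ar Al _ _] [Bm Br Bl _ _] HH HN f Lf.
have Lp : L2 (posp f) by exact: L2_cut.
have Ln : L2 (negp f) by exact: L2_cut.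
rewrite (decomp f).
apply: aeeq_trans (Al 1 _ _ Lp Ln) _.
apply: aeeq_trans _ (aeeq_sym (Bl 1 _ _ Lp Ln)).
apply: aeeq_lin.
- apply: HH; split => //; exact: supp_posp.
- apply: HN => //; exact: supp_negp.
Qed.

Lemma W0 f : L2 f -> aeeq (W 0 f) f.
Proof.
move: f; apply: (ext_decomp _ _ (Wunit 0 (lexx 0)) unit_id).
- exact: W0H.
- by move=> g Lg sg; exact: Wneg.
Qed.

Lemma WCL t s f : 0 <= t -> 0 <= s -> L2 f ->
  aeeq (W (t + s) f) (W t (shiftG t (W s (shiftG (- t) f)))).
Proof.
move=> t0 s0; have ts0 : 0 <= t + s by lra.
move: f.
apply: (ext_decomp _ _ (Wunit _ ts0)
  (unit_comp (Wunit _ t0) (unit_comp (unit_shift t) (unit_comp (Wunit _ s0) (unit_shift (- t)))))).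
- by move=> g Hg; exact: WC.
- move=> g Lg sg; apply: aeeq_trans (Wneg _ _ ts0 Lg sg) _.
  have L1 : L2 (shiftG (- t) g) by exact: L2_shift.
  have e1 := Wneg _ _ s0 L1 (supp_neg_shift t0 sg).
  have e2 := aeeq_shift t e1; rewrite shiftGC subrr shiftG0 in e2.
  apply: aeeq_sym; apply: aeeq_trans (Wneg _ _ t0 Lg sg).
  apply: Wr => //; apply: L2_shift; exact: WL2.
Qed.

Lemma WsCL a b h : 0 <= a -> 0 <= b -> L2 h ->
  aeeq (Ws (a + b) h) (shiftG a (Ws b (shiftG (- a) (Ws a h)))).
Proof.
move=> a0 b0 Lh; have ab0 : 0 <= a + b by lra.
set X := shiftG a (Ws b (shiftG (- a) (Ws a h))).
have L1 : L2 (Ws a h) by exact: WsL2.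
have L2' : L2 (shiftG (- a) (Ws a h)) by exact: L2_shift.
have L3 : L2 (Ws b (shiftG (- a) (Ws a h))) by exact: WsL2.
have LX : L2 X by exact: L2_shift.
have E : aeeq (W (a + b) X) h.
  apply: aeeq_trans (WCL _ _ _ a0 b0 LX) _.
  rewrite /X shiftGC addNr shiftG0.
  apply: aeeq_trans (WWs _ _ a0 Lh).
  apply: Wr => //.
  - apply: L2_shift; exact: WL2.
  - have := aeeq_shift a (WWs _ _ b0 L2'); rewrite shiftGC subrr shiftG0.
    by [].
apply: aeeq_sym; apply: aeeq_trans (aeeq_sym (WsW _ _ ab0 LX)) _.
apply: Wsr => //; exact: WL2.
Qed.

Lemma Wfull_pos u : 0 <= u -> Wfull W Ws u = W u.
Proof. by move=> h; rewrite /Wfull h. Qed.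

Lemma Wfull_neg u : u < 0 -> Wfull W Ws u = fun f => shiftG u (Ws (- u) (shiftG (- u) f)).
Proof. by move=> h; rewrite /Wfull; have -> : (0 <= u) = false by rewrite leNgt h. Qed.

Ltac l2 := repeat first [ assumption | apply: L2_shift | (apply: WL2; [lra|]) | (apply: WsL2; [lra|]) ].

Lemma case2 u v g : u < 0 -> v < 0 -> L2 g ->
  aeeq (shiftG (u + v) (Ws (- (u + v)) (shiftG (- (u + v)) g)))
       (shiftG u (Ws (- u) (shiftG (- u) (shiftG u (shiftG v (Ws (- v) (shiftG (- v) (shiftG (- u) g)))))))).
Proof.
move=> hu hv Lg.
have -> : - (u + v) = - v + - u by ring.
apply: aeeq_trans (aeeq_shift _ (WsCL (-v) (-u) _ _ _ _)) _; try lra; first l2.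
rewrite !shiftGC; apply: aeeq_eq; repeat f_equal; ring.
Qed.

Lemma shiftGz a f : a = 0 -> shiftG a f = f.
Proof. by move=> ->; rewrite shiftG0. Qed.

Lemma case3 d e g : 0 <= d -> 0 < e -> L2 g ->
  aeeq (W d g) (W (d + e) (shiftG (d + e) (shiftG (- e) (Ws e (shiftG e (shiftG (- (d + e)) g)))))).
Proof.
move=> hd he Lg; apply: aeeq_sym.
apply: aeeq_trans (WCL d e _ _ _ _) _; try lra; first l2.
rewrite !shiftGC [shiftG _ (Ws _ _)]shiftGz; last ring.
apply: (@aeeq_trans _ _ (W d (shiftG d (shiftG (e - (d + e)) g)))).
- apply: Wr; try lra; try l2.
  apply: aeeq_shift; apply: WWs; try lra; l2.
- rewrite shiftGC shiftGz; [exact: aeeq_refl|ring].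
Qed.

Lemma case4 u c g : 0 <= u -> 0 < c -> L2 g ->
  aeeq (shiftG (- c) (Ws c (shiftG c g)))
       (W u (shiftG u (shiftG (- (u + c)) (Ws (c + u) (shiftG c g))))).
Proof.
move=> hu hc' Lg; apply: aeeq_sym.
apply: (@aeeq_trans _ _ (W u (shiftG u (shiftG (- (u + c)) (shiftG c (Ws u (shiftG (- c) (Ws c (shiftG c g))))))))).
- apply: Wr; try lra; try l2.
  apply: aeeq_shift; apply: aeeq_shift; apply: WsCL; try lra; l2.
- rewrite !shiftGC [shiftG _ (Ws u _)]shiftGz; last ring.
  apply: WWs; try lra; l2.
Qed.

Lemma case5 a d g : 0 < a -> 0 <= d -> L2 g ->
  aeeq (W d g) (shiftG (- a) (Ws a (W (a + d) (shiftG a g)))).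
Proof.
move=> ha' hd Lg; apply: aeeq_sym.
apply: (@aeeq_trans _ _ (shiftG (- a) (Ws a (W a (shiftG a (W d (shiftG (- a) (shiftG a g)))))))).
- apply: aeeq_shift; apply: Wsr; try lra; try l2.
  apply: WCL; try lra; l2.
- apply: (@aeeq_trans _ _ (shiftG (- a) (shiftG a (W d (shiftG (- a) (shiftG a g)))))).
  + apply: aeeq_shift; apply: WsW; try lra; l2.
  + rewrite !shiftGC !shiftGz; try ring; exact: aeeq_refl.
Qed.

Lemma case6 v c g : 0 <= v -> 0 < c -> L2 g ->
  aeeq (shiftG (- c) (Ws c (shiftG c g)))
       (shiftG (- (v + c)) (Ws (v + c) (W v (shiftG (v + c) g)))).
Proof.
move=> hv hc' Lg; apply: aeeq_sym.
apply: (@aeeq_trans _ _ (shiftG (- (v + c)) (shiftG v (Ws c (shiftG (- v) (Ws v (W v (shiftG (v + c) g)))))))).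
- apply: aeeq_shift; apply: WsCL; try lra; l2.
- apply: (@aeeq_trans _ _ (shiftG (- (v + c)) (shiftG v (Ws c (shiftG (- v) (shiftG (v + c) g)))))).
  + apply: aeeq_shift; apply: aeeq_shift; apply: Wsr; try lra; try l2.
    apply: aeeq_shift; apply: WsW; try lra; l2.
  + rewrite !shiftGC; apply: aeeq_eq; repeat f_equal; ring.
Qed.

Lemma shiftGNK a f : shiftG (- a) (shiftG a f) = f.
Proof. by rewrite shiftGC addNr shiftG0. Qed.

Ltac norm := rewrite ?shiftGNK ?shiftGC; apply: aeeq_eq; repeat f_equal; ring.

Lemma WfC u v g : L2 g ->
  aeeq (Wfull W Ws (u + v) g) (Wfull W Ws u (shiftG u (Wfull W Ws v (shiftG (- u) g)))).
Proof.
move=> Lg.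
case: (leP 0 u) => hu; case: (leP 0 v) => hv.
- rewrite !Wfull_pos //; last lra.
  exact: WCL.
- case: (leP 0 (u + v)) => huv.
  + rewrite (Wfull_pos _ huv) (Wfull_pos _ hu) (Wfull_neg _ hv).
    apply: aeeq_trans (case3 (u + v) (- v) g _ _ _) _; try lra; first by [].
    norm.
  + rewrite (Wfull_neg _ huv) (Wfull_pos _ hu) (Wfull_neg _ hv).
    apply: (aeeq_trans _ (aeeq_trans (case4 u (- (u + v)) g _ _ _) _)); try lra; try by [].
    * norm.
    * norm.
- case: (leP 0 (u + v)) => huv.
  + rewrite (Wfull_pos _ huv) (Wfull_neg _ hu) (Wfull_pos _ hv).
    apply: aeeq_trans (case5 (- u) (u + v) g _ _ _) _; try lra; first by [].
    norm.
  + rewrite (Wfull_neg _ huv) (Wfull_neg _ hu) (Wfull_pos _ hv).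
    apply: (aeeq_trans _ (aeeq_trans (case6 v (- (u + v)) g _ _ _) _)); try lra; try by [].
    * norm.
    * norm.
- have huv : u + v < 0 by lra.
  rewrite (Wfull_neg _ huv) (Wfull_neg _ hu) (Wfull_neg _ hv).
  exact: case2.
Qed.

Lemma main_thm :
  [/\ (forall u : R, unitary_on (@L2 R) (Vtilde W Ws u)),
      (forall f, L2 f -> aeeq (Vtilde W Ws 0 f) f),
      (forall (u v : R) f, L2 f ->
         aeeq (Vtilde W Ws (u + v) f) (Vtilde W Ws u (Vtilde W Ws v f))),
      (forall (t : R) f, 0 <= t -> L2 f -> supp_pos f ->
         aeeq (Vtilde W Ws t f) (Vpert W t f))
    & (forall (t : R) f, t <= 0 -> L2 f -> supp_neg f ->
         aeeq (Vtilde W Ws t f) (shiftG t f))].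
Proof.
split.
- move=> u; case: (leP 0 u) => hu.
  + have -> : Vtilde W Ws u = fun f => W u (shiftG u f).
      by apply/funext => f; rewrite /Vtilde Wfull_pos.
    exact: (unit_comp (Wunit _ hu) (unit_shift u)).
  + have -> : Vtilde W Ws u = fun f => shiftG u (Ws (- u) (shiftG (- u) (shiftG u f))).
      by apply/funext => f; rewrite /Vtilde Wfull_neg.
    have hu' : 0 <= - u by lra.
    exact: (unit_comp (unit_shift u) (unit_comp (Wsunit _ hu') (unit_comp (unit_shift (- u)) (unit_shift u)))).
- move=> f Lf; rewrite /Vtilde Wfull_pos // shiftG0; exact: W0.
- move=> u v f Lf; rewrite /Vtilde.
  rewrite (_ : shiftG v f = shiftG (- u) (shiftG (u + v) f)); last first.
    by rewrite shiftGC; f_equal; ring.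
  apply: WfC; exact: L2_shift.
- move=> t f t0 Lf sf; rewrite /Vtilde /Vpert Wfull_pos //.
  apply: Wr => //; first exact: L2_shift.
  + rewrite shiftS_cut; apply: L2_cut; exact: L2_shift.
  + exact: shiftS_shiftG.
- move=> t f t0 Lf sf; case: (ltP t 0) => ht.
  + rewrite /Vtilde Wfull_neg // shiftGNK; apply: aeeq_shift.
    apply: Wsneg => //; lra.
  + have -> : t = 0 by apply/eqP; rewrite eq_le t0 ht.
    rewrite /Vtilde Wfull_pos // !shiftG0; exact: Wneg.
Qed.
End E.

Local Close Scope classical_set_scope.
Theorem proposition4 (R : realType) (W Ws : R -> op R) :
  cocycle W ->
  (forall t, 0 <= t -> is_adjoint (W t) (Ws t)) ->
  [/\ (forall u : R, unitary_on (@L2 R) (Vtilde W Ws u)),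
      (forall f, L2 f -> aeeq (Vtilde W Ws 0 f) f),
      (forall (u v : R) f, L2 f ->
         aeeq (Vtilde W Ws (u + v) f) (Vtilde W Ws u (Vtilde W Ws v f))),
      (forall (t : R) f, 0 <= t -> L2 f -> supp_pos f ->
         aeeq (Vtilde W Ws t f) (Vpert W t f))
    & (forall (t : R) f, t <= 0 -> L2 f -> supp_neg f ->
         aeeq (Vtilde W Ws t f) (shiftG t f))].
Proof. move=> hc ha; exact: main_thm. Qed.

Local Close Scope classical_set_scope.
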